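(* (a) For any two directed graphs $G_1,G_2$ on the same vertex set $V$ (directed cycles allowed), if $D_{sep}(G_1)\subseteq D_{sep}(G_2)$ then $S(G_2)\subseteq S(G_1)$. (b) There exist two directed graphs $G_1,G_2$ on the same vertex set (with directed cycles) such that $S(G_1)=S(G_2)$, $D_{sep}(G_1)\neq D_{sep}(G_2)$ and $D_{sep}(G_1)\subset D_{sep}(G_2)$. For directed acyclic graphs, no two such graphs exist.
   Context: A directed graph $G=(V,E)$ has vertex set $V=\{1,\dots,p\}$ and directed edges $j\to k$ ($j\ne k$); directed cycles are allowed (a DCG), and a DAG is one without directed cycles. $k$ is a child of $j$ if $j\to k$; $k$ is a descendant of $j$ (and $j$ an ancestor of $k$) if there is a directed path $j\to\cdots\to k$. $j,k$ are really adjacent if $j\to k$ or $k\to j$, and virtually adjacent if they have a common child $\ell$ that is an ancestor of $j$ or of $k$. The skeleton $S(G)$ is the set of unordered pairs that are really or virtually adjacent. On an undirected path $\pi$, an interior vertex $b$ is a collider if both path edges at $b$ point into $b$. For $S\subset V\setminus\{j,k\}$, $j$ is d-connected to $k$ given $S$ if there is an undirected path between $j$ and $k$ on which every interior vertex lying in $S$ is a collider and every collider has itself or a descendant in $S$; otherwise $j$ is d-separated from $k$ given $S$. $D_{sep}(G)$ denotes the set of d-separation rules entailed by $G$, i.e. the set of all triples $(j,k,S)$ with $j\neq k$, $S\subset V\setminus\{j,k\}$ and $j$ d-separated from $k$ given $S$ in $G$. *)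

(* Defs.v *)
(* Directed graphs on V = 'I_p (vertices 0..p-1 stand for 1..p). *)
From mathcomp Require Import all_boot.
Set Implicit Arguments. Unset Strict Implicit. Unset Printing Implicit Defensive.

Definition digraph (p : nat) (E : rel 'I_p) : Prop := forall j, ~~ E j j.

Definition acyclic (p : nat) (E : rel 'I_p) : Prop :=
  forall j k, E j k -> ~~ connect E k j.

Definition skel (p : nat) (E : rel 'I_p) (j k : 'I_p) : Prop :=
  j != k /\
  (E j k \/ E k j \/
   exists l, [/\ E j l, E k l & connect E l j || connect E l k]).

(* An undirected path from j is encoded as a nonempty list of steps (v, d):
   the step goes from the previous vertex u to v, using the edge u -> v if
   d = true and the edge v -> u if d = false.  The interior vertices are the endpoints of all steps
   but the last; the endpoint of step i (i+1 < size s) is a collider iff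
   step i points into it (d_i = true) and step i+1 points into it
   (d_{i+1} = false). *)
Definition collider_at (p : nat) (j : 'I_p) (s : seq ('I_p * bool)) (i : nat) : bool :=
  (nth (j, true) s i).2 && ~~ (nth (j, true) s i.+1).2.

Definition dconnected (p : nat) (E : rel 'I_p) (j k : 'I_p) (S : {set 'I_p}) : Prop :=
  exists s : seq ('I_p * bool),
  [/\ s != [::],
      uniq (j :: map fst s),
      last j (map fst s) = k,
      (forall i, i < size s ->
         let u := nth j (j :: map fst s) i in
         let v := (nth (j, true) s i).1 in
         if (nth (j, true) s i).2 then E u v else E v u)
    & (forall i, i.+1 < size s ->
         let b := (nth (j, true) s i).1 in
         (b \in S -> collider_at j s i) /\
         (collider_at j s i -> exists2 c, c \in S & connect E b c))].

Definition Dsep (p : nat) (E : rel 'I_p) (j k : 'I_p) (S : {set 'I_p}) : Prop :=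
  [/\ j != k, j \notin S, k \notin S & ~ dconnected E j k S].

Definition Dsep_sub (p : nat) (E1 E2 : rel 'I_p) : Prop :=
  forall j k S, Dsep E1 j k S -> Dsep E2 j k S.

Definition Dsep_eq (p : nat) (E1 E2 : rel 'I_p) : Prop :=
  forall j k S, Dsep E1 j k S <-> Dsep E2 j k S.

Definition skel_sub (p : nat) (E1 E2 : rel 'I_p) : Prop :=
  forall j k, skel E1 j k -> skel E2 j k.

Definition skel_eq (p : nat) (E1 E2 : rel 'I_p) : Prop :=
  forall j k, skel E1 j k <-> skel E2 j k.

(* Main.v *)
Require Import Defs.
From mathcomp Require Import all_boot.
From Stdlib Require Import Classical Lia FunctionalExtensionality.
From mathcomp Require Import zify.

Set Implicit Arguments. Unset Strict Implicit. Unset Printing Implicit Defensive.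

Section Basics.
Variable p : nat.
Implicit Types (E : rel 'I_p) (S : {set 'I_p}).

Lemma map_fst_pair (d : bool) (q : seq 'I_p) : map fst (map (fun v => (v, d)) q) = q.
Proof. by elim: q => //= a q ->. Qed.

Lemma dir_dconn E S j k (d : bool) (q : seq 'I_p) :
  q != [::] -> uniq (j :: q) -> last j q = k ->
  path (fun a b => if d then E a b else E b a) j q ->
  {in q, forall v, v \notin S} ->
  dconnected E j k S.
Proof.
move=> qn uq lq pq qS; exists (map (fun v => (v, d)) q); split.
- by case: q qn {uq lq pq qS}.
- by rewrite map_fst_pair.
- by rewrite map_fst_pair.
- move=> i; rewrite size_map => ilt /=.
  rewrite map_fst_pair (nth_map j) //=.
  by move/pathP: pq => /(_ j i ilt); case: d.
- move=> i ilt; rewrite size_map in ilt.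
  rewrite /collider_at (nth_map j) ?(ltnW ilt) //= (nth_map j) //= andbN; split=> //.
  move=> inS; have : nth j q i \in q by rewrite mem_nth // ltnW.
  by move/qS; rewrite inS.
Qed.


Definition Rav E (j k : 'I_p) : rel 'I_p := fun a b => E a b && (a != j) && (a != k).

Lemma reach_first E j k l q : path E l q -> l != j -> l != k ->
  (last l q == j) || (last l q == k) ->
  exists2 t, (t == j) || (t == k) & connect (Rav E j k) l t.
Proof.
elim: q l => [|a q IH] l /=; first by move=> _ /negbTE -> /negbTE ->.
move=> /andP[Ela pq] lj lk H.
have Rla : Rav E j k l a by rewrite /Rav Ela lj lk.
case: (boolP ((a == j) || (a == k))) => Ha.
  by exists a => //; apply: connect1.
move: Ha; rewrite negb_or => /andP[aj ak].
have [t Ht ct] := IH a pq aj ak H.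
by exists t => //; apply: connect_trans (connect1 Rla) ct.
Qed.

Lemma belast_avoid E j k l q : path (Rav E j k) l q ->
  {in belast l q, forall v, (v != j) && (v != k)}.
Proof.
elim: q l => [|a q IH] l /=; first by [].
move=> /andP[Rla pq] v; rewrite inE => /orP[/eqP -> | vin].
  by move: Rla; rewrite /Rav -andbA => /and3P[_ -> ->].
exact: IH pq v vin.
Qed.

Lemma Rav_sub E j k : subrel (Rav E j k) E.
Proof. by move=> a b /andP[/andP[]]. Qed.

Lemma virt_dconn E S j k l :
  digraph E -> j != k -> j \notin S -> k \notin S ->
  E j l -> E k l -> (connect E l j || connect E l k) ->
  (forall c, connect E l c -> c \notin S) -> dconnected E j k S.
Proof.
move=> dE jk jS kS Ejl Ekl conn noS.
have lj : l != j by apply/eqP=> le; move: Ejl; rewrite le (negbTE (dE j)).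
have lk : l != k by apply/eqP=> le; move: Ekl; rewrite le (negbTE (dE k)).
have [t Ht ct] : exists2 t, (t == j) || (t == k) & connect (Rav E j k) l t.
  case/orP: conn => /connectP[q pq lq]; apply: (reach_first pq lj lk).
    by rewrite -lq eqxx.
  by rewrite -lq eqxx orbT.
case/connectP: ct => q0 pq0 lq0.
case: (shortenP pq0) lq0 => q pq uq _ lq0.
subst t.
have bav := belast_avoid pq.
have pEq : path E l q := sub_path (@Rav_sub E j k) pq.
have desc : {in l :: q, forall v, v \notin S}.
  by move=> v vin; apply: noS; apply: (path_connect pEq).
have memq : forall v, v \in l :: q -> (v \in belast l q) || (v == last l q).
  by move=> v; rewrite lastI mem_rcons inE orbC.
case/orP: Ht => /eqP lq.
-
  apply: (@dir_dconn E S j k false (rcons (rev (belast l q)) k)).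
  + by case: (rev _).
  + rewrite /= mem_rcons inE negb_or mem_rev /= jk /=.
    have -> : j \in belast l q = false.
      by apply/negP => /bav; rewrite eqxx.
    rewrite rcons_uniq mem_rev rev_uniq.
    have -> : k \in belast l q = false.
      by apply/negP => /bav; rewrite eqxx andbF.
    by move: uq; rewrite lastI rcons_uniq => /andP[].
  + by rewrite last_rcons.
  + rewrite rcons_path; apply/andP; split.
      have := rev_path (fun a b => E b a) l q; rewrite lq => ->.
      exact: pEq.
    move: lq {pq uq bav pEq desc memq}; case: q => [|a q'] /= lq.
      by move: lj; rewrite lq eqxx.
    by rewrite rev_cons last_rcons.
  + move=> v; rewrite mem_rcons inE mem_rev => /orP[/eqP -> //|vin].
    by apply: desc; rewrite (mem_belast vin).
-
  apply: (@dir_dconn E S j k true (l :: q)) => //.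
  + rewrite cons_uniq uq andbT.
    apply/negP => jq; move/memq: jq => /orP[/bav|/eqP]; first by rewrite eqxx.
    by move=> jkk; move: jk; rewrite jkk lq eqxx.
  + by rewrite /= Ejl pEq.
Qed.

Lemma skel_dconn E S j k : digraph E -> j \notin S -> k \notin S ->
  skel E j k -> dconnected E j k S.
Proof.
move=> dE jS kS [jk [Ejk | [Ekj | [l [Ejl Ekl conn]]]]].
- apply: (@dir_dconn E S j k true [:: k]) => //=.
  + by rewrite inE jk.
  + by rewrite Ejk.
  + by move=> v; rewrite inE => /eqP ->.
- apply: (@dir_dconn E S j k false [:: k]) => //=.
  + by rewrite inE jk.
  + by rewrite Ekj.
  + by move=> v; rewrite inE => /eqP ->.
case: (boolP [exists c, (c \in S) && connect E l c]) => [/existsP[c /andP[cS lc]] | /existsPn H].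
- have lj : l != j by apply/eqP=> le; move: Ejl; rewrite le (negbTE (dE j)).
  have lk : l != k by apply/eqP=> le; move: Ekl; rewrite le (negbTE (dE k)).
  exists [:: (l, true); (k, false)]; split => //=.
  + by rewrite !inE negb_or eq_sym lj jk lk.
  + by case=> [|[|i]] //= _; rewrite ?Ejl ?Ekl.
  + case=> [|i] //= _; split=> //.
    by move=> _; exists c.
- apply: (virt_dconn dE jk jS kS Ejl Ekl conn).
  by move=> c lc; apply/negP=> cS; move: (H c); rewrite cS lc.
Qed.


Lemma V_succ (j : 'I_p) (s : seq ('I_p * bool)) i : i < size s ->
  nth j (j :: map fst s) i.+1 = (nth (j, true) s i).1.
Proof. by move=> H; rewrite /= (nth_map (j, true)). Qed.

Lemma b_last (j : 'I_p) (s : seq ('I_p * bool)) : s != [::] ->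
  (nth (j, true) s (size s).-1).1 = last j (map fst s).
Proof.
move=> sn; rewrite -(nth_map (j, true) j); last by case: s sn.
by rewrite -(size_map fst) nth_last.
Qed.

Lemma shape E j k (s : seq ('I_p * bool)) :
  s != [::] -> last j (map fst s) = k ->
  (forall i, i < size s ->
         let u := nth j (j :: map fst s) i in
         let v := (nth (j, true) s i).1 in
         if (nth (j, true) s i).2 then E u v else E v u) ->
  (forall i, i.+1 < size s -> collider_at j s i) ->
  E j k \/ E k j \/ (1 < size s /\ E j (nth (j, true) s 0).1 /\ E k (nth (j, true) s 0).1).
Proof.
case: s => [|[b d] [|[c e] [|x s']]] //= _ lk ed col.
- have := ed 0 erefl; rewrite /= -lk; case: (d) => H; auto.
- have := col 0 erefl; rewrite /collider_at /= => /andP[dd ee].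
  have := ed 0 erefl; have := ed 1 erefl; rewrite /= -lk dd (negbTE ee) => H1 H2.
  by right; right.
- have := col 0 erefl; have := col 1 erefl; rewrite /collider_at /=.
  by case: (e); rewrite ?andbF ?andbT.
Qed.

Definition ancs E (j k : 'I_p) : {set 'I_p} :=
  [set x | (connect E x j || connect E x k) && (x != j) && (x != k)].

Lemma nskel_dsep E j k : digraph E -> j != k -> ~ skel E j k -> Dsep E j k (ancs E j k).
Proof.
move=> dE jk nsk; split => //.
- by rewrite inE eqxx andbF.
- by rewrite inE eqxx !andbF.
move=> [s [sn us lk ed col]].
pose A x := connect E x j || connect E x k.
have An : forall x y, E x y -> A y -> A x.
  move=> x y Exy; rewrite /A => /orP[H|H]; apply/orP; [left|right];
    exact: connect_trans (connect1 Exy) H.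
have colA : forall i, i.+1 < size s -> collider_at j s i -> A (nth (j, true) s i).1.
  move=> i ilt /(proj2 (col i ilt)) [c cS bc].
  move: cS; rewrite inE -andbA => /andP[H _].
  by case/orP: H => H; apply/orP; [left|right]; exact: connect_trans bc H.
have bk : (nth (j, true) s (size s).-1).1 = k by rewrite b_last.
have Pf : forall m i, size s - i <= m -> i < size s -> (nth (j, true) s i).2 ->
          A (nth (j, true) s i).1.
  elim=> [|m IH] i; first by rewrite leqn0 subn_eq0 => H ilt; have := leq_trans ilt H; rewrite ltnn.
  move=> sm ilt di.
  case: (ltnP i.+1 (size s)) => ilt2; last first.
    have -> : i = (size s).-1 by apply/eqP; rewrite -eqSS prednK ?(leq_ltn_trans _ ilt) // eqn_leq ilt2 ilt.
    by rewrite bk /A connect0 orbT.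
  case: (boolP (collider_at j s i)) => ci; first exact: colA.
  have di1 : (nth (j, true) s i.+1).2.
    by move: ci; rewrite /collider_at di /= negbK.
  have := ed i.+1 ilt2; rewrite V_succ ?(ltnW ilt2) // di1 => Eb.
  apply: An Eb _; apply: IH => //; first by rewrite subnS -ltnS prednK ?subn_gt0 // (leq_trans _ sm) // ltnS leqnn.
have Qb : forall i, i < size s -> ~~ (nth (j, true) s i).2 ->
          A (nth j (j :: map fst s) i).
  elim=> [|i IH] ilt di; first by rewrite /= /A connect0.
  rewrite V_succ ?(ltnW ilt) //.
  case: (boolP (collider_at j s i)) => ci; first exact: colA.
  have di0 : ~~ (nth (j, true) s i).2 by move: ci; rewrite /collider_at di andbT.
  have := ed i (ltnW ilt); rewrite (negbTE di0) => Eb.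
  exact: An Eb (IH (ltnW ilt) di0).
have intA : forall i, i.+1 < size s -> A (nth (j, true) s i).1.
  move=> i ilt.
  case: (boolP (collider_at j s i)) => ci; first exact: colA.
  move: ci; rewrite /collider_at negb_and negbK => /orP[di|di1].
    have := ed i (ltnW ilt); rewrite (negbTE di) => Eb.
    exact: An Eb (Qb i (ltnW ilt) di).
  have := ed i.+1 ilt; rewrite V_succ ?(ltnW ilt) // di1 => Eb.
  apply: An Eb _; apply: (Pf (size s)) => //; exact: leq_subr.
have intS : forall i, i.+1 < size s -> collider_at j s i.
  move=> i ilt; apply: (proj1 (col i ilt)).
  rewrite inE -andbA; apply/andP; split; first exact: intA.
  move: us; rewrite cons_uniq => /andP[jn us].
  have bin : (nth (j, true) s i).1 \in map fst s.
    by rewrite -(nth_map _ j) ?(ltnW ilt) // mem_nth // size_map ltnW.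
  apply/andP; split.
    by apply/eqP => bj; move: jn; rewrite -bj bin.
  rewrite -bk -(nth_map _ j) ?(ltnW ilt) // -(nth_map _ j) ?prednK ?(leq_ltn_trans _ ilt) //.
  rewrite nth_uniq ?size_map ?prednK ?(leq_ltn_trans _ ilt) ?(ltnW ilt) //.
  by rewrite -eqSS prednK ?(leq_ltn_trans _ ilt) // neq_ltn ilt.
case: (shape sn lk ed intS) => [H|[H|[s1 [H1 H2]]]]; apply: nsk; split => //; auto.
right; right; exists (nth (j, true) s 0).1; split => //.
exact: intA.
Qed.


Lemma interior_neq (j k : 'I_p) (s : seq ('I_p * bool)) i :
  uniq (j :: map fst s) -> last j (map fst s) = k -> i.+1 < size s ->
  ((nth (j, true) s i).1 != j) && ((nth (j, true) s i).1 != k).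
Proof.
move=> us lk ilt.
have sn : s != [::] by case: s ilt us lk.
have bk : (nth (j, true) s (size s).-1).1 = k by rewrite b_last.
move: us; rewrite cons_uniq => /andP[jn us].
have bin : (nth (j, true) s i).1 \in map fst s.
  by rewrite -(nth_map _ j) ?(ltnW ilt) // mem_nth // size_map ltnW.
apply/andP; split.
  by apply/eqP => bj; move: jn; rewrite -bj bin.
rewrite -bk -(nth_map _ j) ?(ltnW ilt) // -(nth_map _ j) ?prednK ?(leq_ltn_trans _ ilt) //.
rewrite nth_uniq ?size_map ?prednK ?(leq_ltn_trans _ ilt) ?(ltnW ilt) //.
by rewrite -eqSS prednK ?(leq_ltn_trans _ ilt) // neq_ltn ilt.
Qed.

Lemma collider_dconn E S (j k x : 'I_p) : j != k -> x != j -> x != k ->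
  E j x -> E k x -> x \in S -> dconnected E j k S.
Proof.
move=> jk xj xk Ejx Ekx xS.
exists [:: (x, true); (k, false)]; split => //=.
- by rewrite !inE negb_or eq_sym xj jk xk.
- by case=> [|[|i]] //= _; rewrite ?Ejx ?Ekx.
- case=> [|i] //= _; split=> //.
  by move=> _; exists x.
Qed.

Lemma exists_collider (j : 'I_p) (s : seq ('I_p * bool)) :
  (nth (j, true) s 0).2 -> ~~ (nth (j, true) s (size s).-1).2 ->
  exists2 i, i.+1 < size s & collider_at j s i.
Proof.
elim: s => [|[b d] s IH] //=.
case: s IH => [|[c e] s] IH /=; first by move=> ->.
move=> dd H.
case ee: e.
  have [i ilt ci] := IH ee H.
  by exists i.+1; [rewrite ltnS | move: ci; rewrite ee].
by exists 0 => //; rewrite /collider_at /= dd.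
Qed.

Lemma noin_sep E (j k : 'I_p) : (forall u, ~~ E u j) -> (forall u, ~~ E u k) ->
  ~ dconnected E j k set0.
Proof.
move=> nj nk [s [sn us lk ed col]].
have d0 : (nth (j, true) s 0).2.
  have := ed 0; rewrite /=; case: s sn {us lk ed col} => [|[b d] s] //= _.
  by case: (d) => // /(_ erefl) H; move: (nj b); rewrite H.
have dn : ~~ (nth (j, true) s (size s).-1).2.
  have szp : 0 < size s by case: s sn {us lk ed col d0}.
  have := ed (size s).-1; rewrite prednK // => /(_ (leqnn _)).
  rewrite b_last // lk; case: (nth _ _ _).2 => //= H.
  by have := nk (nth j (j :: [seq i.1 | i <- s]) (size s).-1); rewrite H.
have [i ilt ci] := exists_collider d0 dn.
by have [c] := proj2 (col i ilt) ci; rewrite inE.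
Qed.

End Basics.

Lemma part_a p (E1 E2 : rel 'I_p) : digraph E1 -> digraph E2 ->
  Dsep_sub E1 E2 -> skel_sub E2 E1.
Proof.
move=> d1 d2 sub j k sk2; apply: NNPP => nsk1.
have jk : j != k by case: sk2.
have [_ jS kS nd] := sub _ _ _ (nskel_dsep d1 jk nsk1).
by apply: nd; exact: skel_dconn d2 jS kS sk2.
Qed.

Definition o0 : 'I_4 := @Ordinal 4 0 isT.
Definition o1 : 'I_4 := @Ordinal 4 1 isT.
Definition o2 : 'I_4 := @Ordinal 4 2 isT.
Definition o3 : 'I_4 := @Ordinal 4 3 isT.

Definition Ex1 : rel 'I_4 := fun a b =>
  ((a : nat), (b : nat)) \in [:: (0,1); (1,2); (2,1); (3,2); (0,2); (3,1)].
Definition Ex2 : rel 'I_4 := fun a b =>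
  ((a : nat), (b : nat)) \in [:: (0,1); (1,2); (2,1); (3,2)].

Definition bad4 (j k : 'I_4) : bool :=
  (((j : nat) == 0) && ((k : nat) == 3)) || (((j : nat) == 3) && ((k : nat) == 0)).

Ltac ord4 x := let H := fresh in case: x => [[|[|[|[|?]]]] H] //.

Lemma Ex1_dg : digraph Ex1.
Proof. by move=> j; ord4 j. Qed.
Lemma Ex2_dg : digraph Ex2.
Proof. by move=> j; ord4 j. Qed.

Lemma noin_conn (p : nat) (E : rel 'I_p) w v : (forall u, ~~ E u v) -> connect E w v -> w = v.
Proof.
move=> nv /connectP[q pq]; case/lastP: q pq => [|q a] // + vl.
rewrite last_rcons in vl; subst a.
rewrite rcons_path => /andP[_ H]; by move: (nv (last w q)); rewrite H.
Qed.

Lemma bad_noedge1 (j k : 'I_4) : bad4 j k -> ~~ Ex1 j k && ~~ Ex1 k j.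
Proof. by ord4 j; ord4 k. Qed.
Lemma bad_noedge2 (j k : 'I_4) : bad4 j k -> ~~ Ex2 j k && ~~ Ex2 k j.
Proof. by ord4 j; ord4 k. Qed.
Lemma bad_nol1 (j k l : 'I_4) : bad4 j k -> Ex1 j l -> Ex1 k l -> ((l : nat) == 0) || ((l : nat) == 3) -> False.
Proof. by ord4 j; ord4 k; ord4 l. Qed.
Lemma bad_nol2 (j k l : 'I_4) : bad4 j k -> Ex2 j l -> Ex2 k l -> ((l : nat) == 0) || ((l : nat) == 3) -> False.
Proof. by ord4 j; ord4 k; ord4 l. Qed.
Lemma nbad1 (j k : 'I_4) : j != k -> ~~ bad4 j k -> Ex1 j k || Ex1 k j.
Proof. by ord4 j; ord4 k. Qed.

Lemma bad_skel (E : rel 'I_4) j k : bad4 j k -> (forall u, ~~ E u o0) -> (forall u, ~~ E u o3) ->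
  (~~ E j k && ~~ E k j) ->
  (forall l, bad4 j k -> E j l -> E k l -> ((l : nat) == 0) || ((l : nat) == 3) -> False) ->
  ~ skel E j k.
Proof.
move=> b n0 n3 /andP[nj nk] nol [jk Hs].
have nl : forall l, (connect E l j || connect E l k) -> ((l : nat) == 0) || ((l : nat) == 3).
  move=> l; case/orP: (b) => /andP[/eqP j0 /eqP k3] /orP[] /noin_conn H.
  + by rewrite (H _) ?j0 // => u; have -> : j = o0 by apply: val_inj.
  + by rewrite (H _) ?k3 ?orbT // => u; have -> : k = o3 by apply: val_inj.
  + by rewrite (H _) ?j0 ?orbT // => u; have -> : j = o3 by apply: val_inj.
  + by rewrite (H _) ?k3 // => u; have -> : k = o0 by apply: val_inj.
case: Hs => [H|[H|[l [E1 E2 /nl]]]].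
+ by move: nj; rewrite H.
+ by move: nk; rewrite H.
+ exact: nol.
Qed.

Lemma Ex1_skel j k : skel Ex1 j k <-> (j != k) && ~~ bad4 j k.
Proof.
split.
- move=> Hs; case: (Hs) => jk _; rewrite jk /=; apply/negP => b.
  apply: (bad_skel b _ _ (bad_noedge1 b) (@bad_nol1 j k)) Hs => u; ord4 u.
- by move=> /andP[jk nb]; split => //; case/orP: (nbad1 jk nb); auto.
Qed.

Lemma virt2 (j k : 'I_4) : j != k -> ~~ bad4 j k -> ~~ (Ex2 j k || Ex2 k j) ->
  exists l, Ex2 j l && Ex2 k l && (Ex2 l j || Ex2 l k).
Proof.
ord4 j; ord4 k; first [done | by move=> *; exists o1 | by move=> *; exists o2].
Qed.

Lemma Ex2_skel j k : skel Ex2 j k <-> (j != k) && ~~ bad4 j k.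
Proof.
split.
- move=> Hs; case: (Hs) => jk _; rewrite jk /=; apply/negP => b.
  apply: (bad_skel b _ _ (bad_noedge2 b) (@bad_nol2 j k)) Hs => u; ord4 u.
- move=> /andP[jk nb]; split => //.
  case: (boolP (Ex2 j k || Ex2 k j)) => [/orP[]|H]; auto.
  have [l /andP[/andP[E1 E2] H3]] := virt2 jk nb H.
  right; right; exists l; split => //.
  by case/orP: H3 => H3; apply/orP; [left|right]; apply: connect1.
Qed.

Lemma bad_col1 (j k x : 'I_4) : bad4 j k -> x != j -> x != k -> Ex1 j x && Ex1 k x.
Proof. by ord4 j; ord4 k; ord4 x. Qed.

Lemma bad_noin2 (j k : 'I_4) : bad4 j k -> (forall u, ~~ Ex2 u j) /\ (forall u, ~~ Ex2 u k).
Proof. by ord4 j; ord4 k => _; split => u; ord4 u. Qed.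

Lemma ex_sub : Dsep_sub Ex1 Ex2.
Proof.
move=> j k S [jk jS kS nd].
have b : bad4 j k.
  apply/negPn/negP => nb.
  apply: nd; apply: skel_dconn Ex1_dg jS kS _.
  by apply/Ex1_skel; rewrite jk nb.
have S0 : S = set0.
  apply/setP => x; rewrite inE; apply/negP => xS.
  have xj : x != j by apply: contraNneq jS => <-.
  have xk : x != k by apply: contraNneq kS => <-.
  case/andP: (bad_col1 b xj xk) => E1 E2.
  by apply: nd; apply: (collider_dconn jk xj xk E1 E2 xS).
subst S; split => //; have [n1 n2] := bad_noin2 b.
exact: noin_sep n1 n2.
Qed.

Lemma S12_in (b : 'I_4) : b != o0 -> b != o3 -> b \in [set o1; o2].
Proof. by rewrite !inE; ord4 b. Qed.

Lemma ex_neq : ~ Dsep_eq Ex1 Ex2.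
Proof.
move=> H.
have D2 : Dsep Ex2 o0 o3 [set o1; o2].
  split; [by [] | by rewrite !inE | by rewrite !inE |].
  move=> [s [sn us lk ed col]].
  have intS : forall i, i.+1 < size s -> collider_at o0 s i.
    move=> i ilt; apply: (proj1 (col i ilt)).
    case/andP: (interior_neq us lk ilt) => h1 h2; exact: S12_in.
  case: (shape sn lk ed intS) => [//|[//|[_ [E1 E2]]]].
  by move: E1 E2; case: (nth _ _ _).1 => -[|[|[|[|?]]]] ?.
case: (proj2 (H o0 o3 [set o1; o2]) D2) => _ _ _; apply.
apply: (@collider_dconn _ Ex1 _ o0 o3 o1) => //.
by rewrite !inE eqxx.
Qed.

(* ---------- walks as paths in a state graph ---------- *)
Section Walks.
Variable p : nat.
Implicit Types (E : rel 'I_p) (S : {set 'I_p}).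

Definition Ts E S : rel ('I_p * bool) := fun x y =>
  (if y.2 then E x.1 y.1 else E y.1 x.1) && ((x.1 \in S) == (x.2 && ~~ y.2)).

Definition SW E S (j k : 'I_p) := exists g, connect (Ts E S) (j, false) (k, g).

Lemma detour E S b c : b \notin S -> connect E b c -> c \in S ->
  connect (Ts E S) (b, true) (b, false).
Proof.
move=> bS /connectP[q pq ->] {c}.
elim: q b bS pq => [|a q IH] b bS /=; first by move=> _ H; move: bS; rewrite H.
move=> /andP[Eba pq] lS.
case: (boolP (a \in S)) => aS.
  apply: (@connect_trans _ _ (a, true)); apply: connect1; rewrite /Ts /= Eba.
    by rewrite (negbTE bS).
  by rewrite aS.
apply: (@connect_trans _ _ (a, true)).
  by apply: connect1; rewrite /Ts /= Eba (negbTE bS).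
apply: (connect_trans (IH a aS pq lS)).
by apply: connect1; rewrite /Ts /= Eba (negbTE aS).
Qed.

Lemma dconn_SW E S j k : j \notin S -> dconnected E j k S -> SW E S j k.
Proof.
move=> jS [s [sn us lk ed col]].
have H : forall i, i < size s -> connect (Ts E S) (j, false) (nth (j, true) s i).
  elim=> [|i IH] ilt.
    apply: connect1; rewrite /Ts /= (negbTE jS) /=.
    by have := ed 0 ilt; rewrite /= andbT.
  have edi := ed i.+1 ilt; rewrite /= (nth_map (j, true)) ?(ltnW ilt) // in edi.
  apply: (connect_trans (IH (ltnW ilt))).
  have [cl1 cl2] := col i ilt.
  case: (boolP ((nth (j, true) s i).1 \in S)) => bS.
    apply: connect1; rewrite /Ts edi bS; move: (cl1 bS); rewrite /collider_at => ->.
    by [].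
  case: (boolP (collider_at j s i)) => ci.
    have [c cS bc] := cl2 ci.
    move: (ci); rewrite /collider_at => /andP[di di1].
    apply: (@connect_trans _ _ ((nth (j, true) s i).1, false)).
      have := detour bS bc cS.
      by case: (nth (j, true) s i) di => b d /= ->.
    by apply: connect1; rewrite /Ts (negbTE di1) /= (negbTE bS) andbT; move: edi; rewrite (negbTE di1).
  by apply: connect1; rewrite /Ts edi (negbTE bS); move: ci; rewrite /collider_at => /negbTE ->.
have szp : 0 < size s by case: s sn {us lk ed col H}.
have := H (size s).-1; rewrite prednK // => /(_ (leqnn _)).
move=> c; exists (nth (j, true) s (size s).-1).2.
by rewrite -lk -b_last // -surjective_pairing.
Qed.


Definition Aset E S (v : 'I_p) := [exists c, (c \in S) && connect E v c].

Definition Tw E S : rel ('I_p * bool) := fun x y =>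
  [&& (if y.2 then E x.1 y.1 else E y.1 x.1),
      (x.1 \in S) ==> (x.2 && ~~ y.2) &
      (x.2 && ~~ y.2) ==> Aset E S x.1].

Lemma Ts_Tw E S : subrel (Ts E S) (Tw E S).
Proof.
move=> x y /andP[ed /eqP c]; rewrite /Tw ed /= -c implybb /=.
by apply/implyP => xS; apply/existsP; exists x.1; rewrite xS connect0.
Qed.

Lemma Aset_edge E S v w : E v w -> Aset E S w -> Aset E S v.
Proof.
move=> Evw /existsP[c /andP[cS wc]]; apply/existsP; exists c.
by rewrite cS (connect_trans (connect1 Evw) wc).
Qed.

Lemma walk_to_false E S v q : path (Tw E S) (v, true) q ->
  ~~ (last (v, true) q).2 -> Aset E S v.
Proof.
elim: q v => [|[w g] q IH] v //=.
move=> /andP[/and3P[ed _ c] pq] lq.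
case: g ed c pq lq => /= ed c pq lq; last exact: c.
exact: Aset_edge ed (IH w pq lq).
Qed.

Lemma junction E S v (f1 f2 : bool) y : Tw E S (v, f2) y -> (v \in S -> f1) ->
  (f1 -> ~~ f2 -> Aset E S v) -> Tw E S (v, f1) y.
Proof.
rewrite /Tw /= => /and3P[ed c1 c2] h1 h2; rewrite ed /=.
apply/andP; split.
  apply/implyP => vS; rewrite (h1 vS) /=.
  by move/implyP: c1 => /(_ vS) /andP[].
apply/implyP => /andP[ff gg].
case: (boolP f2) => f2'; first by move/implyP: c2; apply; rewrite f2'.
exact: h2.
Qed.

Lemma nuniq_split (T : eqType) (L : seq ('I_p * T)) : ~~ uniq (map fst L) ->
  exists L1, exists s1, exists L2, exists s2, exists L3,
    L = L1 ++ s1 :: L2 ++ s2 :: L3 /\ s1.1 = s2.1.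
Proof.
elim: L => [|x L IH] //=; rewrite negb_and negbK => /orP[/mapP[y yL xy]|H].
  case/splitPr: yL => L2 L3.
  by exists [::], x, L2, y, L3.
have [L1 [s1 [L2 [s2 [L3 [-> e]]]]]] := IH H.
by exists (x :: L1), s1, L2, s2, L3.
Qed.

Lemma Tw_dconn E S j k st : st != [::] -> uniq (j :: map fst st) ->
  path (Tw E S) (j, false) st -> (last (j, false) st).1 = k -> dconnected E j k S.
Proof.
move=> sn us pst lst; exists st; split => //.
- by rewrite -lst -(last_map fst).
- move=> i ilt /=.
  move/pathP: pst => /(_ (j, false) i ilt) /and3P[ed _ _].
  have e1 : nth j (j :: map fst st) i = (nth (j, false) ((j, false) :: st) i).1.
    by rewrite -(nth_map _ j) //= ltnW.
  by rewrite e1 (set_nth_default (j, false) (j, true) ilt).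
- move=> i ilt /=.
  move/pathP: pst => /(_ (j, false) i.+1 ilt) /= /and3P[_ c1 c2].
  rewrite /collider_at !(set_nth_default (j, false) (j, true)) ?(ltnW ilt) //.
  split; first by move/implyP: c1.
  by move/implyP: c2 => H /H /existsP[c /andP[cS bc]]; exists c.
Qed.

Lemma walk_dconn E S j k st : j != k -> j \notin S ->
  path (Tw E S) (j, false) st -> (last (j, false) st).1 = k -> dconnected E j k S.
Proof.
move=> jk jS; have [n] := ubnP (size st); elim: n st => // n IH st szst pst lst.
have sn : st != [::] by case: st {szst} pst lst => //= _ kj; rewrite -kj eqxx in jk.
case: (boolP (uniq (j :: map fst st))) => us; first exact: Tw_dconn sn us pst lst.
have : ~~ uniq (map fst ((j, false) :: st)) by [].
case/nuniq_split => L1 [s1 [L2 [s2 [L3 [eL e12]]]]]; clear us sn.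
case: L1 eL => [|s0 L1] /= [e0 est].
- (* the start vertex is repeated *)
  subst s1 st.
  move: pst; rewrite cat_path => /andP[_ /= /andP[_ p3]].
  case: L3 p3 lst szst => [|t L3] p3 lst szst.
    by move: lst; rewrite last_cat /= -e12 => /eqP; rewrite (negbTE jk).
  apply: (IH (t :: L3)).
  + by move: szst; rewrite size_cat /=; lia.
  + move: p3 => /= /andP[t2 ->]; rewrite andbT.
    have t2' : Tw E S (j, s2.2) t by move: t2; rewrite [s2]surjective_pairing /= -e12.
    by apply: junction t2' _ _ => //; move=> jS'; move: jS; rewrite jS'.
  + by move: lst; rewrite last_cat.
- subst s0 st.
  move: pst; rewrite cat_path => /andP[p1 /= /andP[t1 p23]].
  have lst2 : (last (j, false) (L1 ++ s1 :: L3)).1 = k.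
    clear -lst e12; move: lst; rewrite !last_cat /= last_cat /=.
    by case: L3 => [|t L3] //= <-.
  apply: (IH (L1 ++ s1 :: L3)) => //.
    by move: szst; rewrite !size_cat /= size_cat /=; lia.
  rewrite cat_path p1 /= t1 /=.
  move: p23; rewrite cat_path => /andP[p2 /= /andP[t2 p3]].
  clear lst lst2 szst IH p1 t1.
  case: L3 p3 => [|t L3] //= /andP[t3 ->]; rewrite andbT.
  case: s1 e12 p2 t2 => v f1 /= e12 p2 t2.
  case: s2 e12 t2 t3 => v2 f2 /= <- {v2} t2 t3.
  apply: (junction t3).
  + move=> vS; case: L2 p2 t2 => [|h L2] /=.
      by move=> _ /and3P[_ /implyP /(_ vS) /andP[]].
    by move=> /andP[/and3P[_ /implyP /(_ vS) /andP[]]].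
  + move: p2 t2; case: (f1) => // p2 t2 _ nf2.
    have : path (Tw E S) (v, true) (rcons L2 (v, f2)) by rewrite rcons_path p2 t2.
    by move/walk_to_false; apply; rewrite last_rcons.
Qed.

Lemma SW_dconn E S j k : j != k -> j \notin S -> SW E S j k -> dconnected E j k S.
Proof.
move=> jk jS [g /connectP[st pst lst]].
apply: (walk_dconn jk jS (sub_path (@Ts_Tw E S) pst)).
by rewrite -lst.
Qed.

End Walks.

Lemma path_inv (T : Type) (e : rel T) (P : T -> Prop) x q :
  P x -> (forall a b, P a -> e a b -> P b) -> path e x q -> P (last x q).
Proof.
move=> Px H; elim: q x Px => [|y q IH] x Px //= /andP[exy pq].
exact: IH (H _ _ Px exy) pq.
Qed.

(* ---------- covered edge reversal ---------- *)
Section Covered.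
Variable p : nat.
Variables (E : rel 'I_p) (S : {set 'I_p}) (x y : 'I_p).
Hypotheses (dE : forall a, ~~ E a a) (Exy : E x y) (nEyx : ~~ E y x)
  (C2 : forall z, E z x -> E z y) (C3 : forall z, E z y -> z != x -> E z x).

Definition Erev : rel 'I_p := fun a b =>
  if (a == x) && (b == y) then false else if (a == y) && (b == x) then true else E a b.

Lemma xny : x != y.
Proof. by apply/eqP => exy; move: (dE x); rewrite {2}exy Exy. Qed.

Lemma Erev_xy : Erev x y = false.
Proof. by rewrite /Erev !eqxx. Qed.
Lemma Erev_yx : Erev y x = true.
Proof. by rewrite /Erev !eqxx (negbTE xny) eq_sym (negbTE xny). Qed.
Lemma Erev_l a b : a != x -> a != y -> Erev a b = E a b.
Proof. by move=> /negbTE ax /negbTE ay; rewrite /Erev ax ay. Qed.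
Lemma Erev_r a b : b != x -> b != y -> Erev a b = E a b.
Proof. by move=> /negbTE bx /negbTE by_; rewrite /Erev bx by_ !andbF. Qed.

Lemma Ts_l v f w g : v != x -> v != y -> Ts E S (v, f) (w, g) -> Ts Erev S (v, f) (w, g).
Proof. by move=> vx vy; rewrite /Ts /= (Erev_l w vx vy) (Erev_r w vx vy). Qed.
Lemma Ts_r v f w g : w != x -> w != y -> Ts E S (v, f) (w, g) -> Ts Erev S (v, f) (w, g).
Proof. by move=> wx wy; rewrite /Ts /= (Erev_l v wx wy) (Erev_r v wx wy). Qed.

Variable j : 'I_p.
Definition R' := connect (Ts Erev S) (j, false).

Lemma R'step a b : R' a -> Ts Erev S a b -> R' b.
Proof. by move=> Ra ab; apply: connect_trans Ra (connect1 ab). Qed.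

Definition K1 := R' (x, true) && R' (y, true).
Definition SegXF := [|| R' (x, false), K1 && (y \in S) | R' (y, false) && (y \notin S)].
Definition SegYT := [|| K1, R' (x, false) && (x \notin S) | [&& R' (y, false), y \notin S & x \notin S]].
Definition Inv (st : 'I_p * bool) : bool :=
  if st.1 == x then (if st.2 then K1 else SegXF)
  else if st.1 == y then (if st.2 then SegYT else R' (y, false))
  else R' st.

Lemma Ts_E (v : 'I_p) f w (g : bool) : Ts E S (v, f) (w, g) ->
  (if g then E v w else E w v) /\ ((v \in S) = (f && ~~ g)).
Proof. by move=> /andP[a /eqP b]. Qed.

Lemma L_Nx v f g : v != x -> v != y -> R' (v, f) -> Ts E S (v, f) (x, g) -> Inv (x, g).
Proof.
move=> vx vy Rv T; rewrite /Inv eqxx /=.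
have := T; move/Ts_E => [ed c].
case: g ed c T => ed c T.
  rewrite /K1 (R'step Rv (Ts_l vx vy T)) /=.
  apply: (R'step Rv); rewrite /Ts /= (Erev_l y vx vy) (C2 ed) /=.
  by rewrite c.
by rewrite /SegXF (R'step Rv (Ts_l vx vy T)).
Qed.

Lemma L_Ny v f g : v != x -> v != y -> R' (v, f) -> Ts E S (v, f) (y, g) -> Inv (y, g).
Proof.
move=> vx vy Rv T; rewrite /Inv eq_sym (negbTE xny) eqxx /=.
have := T; move/Ts_E => [ed c].
case: g ed c T => ed c T; last exact: (R'step Rv (Ts_l vx vy T)).
rewrite /SegYT /K1 (R'step Rv (Ts_l vx vy T)) andbT /=.
apply/orP; left; apply: (R'step Rv); rewrite /Ts /= (Erev_l x vx vy) (C3 ed vx) /=.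
by rewrite c.
Qed.

Lemma L_xN f w g : w != x -> w != y -> Inv (x, f) -> Ts E S (x, f) (w, g) -> R' (w, g).
Proof.
move=> wx wy; rewrite /Inv eqxx /= => I T.
have := T; move/Ts_E => [ed c].
case: f I T c => I T c.
  by case/andP: I => Rx _; apply: (R'step Rx (Ts_r wx wy T)).
case/or3P: I.
- by move=> Rx; apply: (R'step Rx (Ts_r wx wy T)).
- case/andP => /andP[Rx Ry] yS; case: g ed c T => ed c T.
    by apply: (R'step Rx); rewrite /Ts /= (Erev_r x wx wy) ed c.
  by apply: (R'step Ry); rewrite /Ts /= (Erev_l y wx wy) (C2 ed) yS.
- case/andP => Ry yS; case: g ed c T => ed c T.
    apply: (@R'step (x, true)).
      by apply: (R'step Ry); rewrite /Ts /= Erev_yx (negbTE yS).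
    by rewrite /Ts /= (Erev_r x wx wy) ed c.
  by apply: (R'step Ry); rewrite /Ts /= (Erev_l y wx wy) (C2 ed) (negbTE yS).
Qed.

Lemma L_yN f w g : w != x -> w != y -> Inv (y, f) -> Ts E S (y, f) (w, g) -> R' (w, g).
Proof.
move=> wx wy; rewrite /Inv eq_sym (negbTE xny) eqxx /= => I T.
have := T; move/Ts_E => [ed c].
case: f I T c => I T c; last by apply: (R'step I (Ts_r wx wy T)).
case/or3P: I.
- by case/andP => _ Ry; apply: (R'step Ry (Ts_r wx wy T)).
- case/andP => Rx xS; case: g ed c T => ed c T.
    apply: (@R'step (y, false)).
      by apply: (R'step Rx); rewrite /Ts /= Erev_yx (negbTE xS).
    by rewrite /Ts /= (Erev_r y wx wy) ed c.
  apply: (R'step Rx); rewrite /Ts /= (Erev_l x wx wy) (C3 ed wx) (negbTE xS).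
  by [].
- case/and3P => Ry yS xS; case: g ed c T => ed c T.
    by apply: (R'step Ry); rewrite /Ts /= (Erev_r y wx wy) ed (negbTE yS).
  by move: yS; rewrite c.
Qed.

Lemma L_xy f g : Inv (x, f) -> Ts E S (x, f) (y, g) -> Inv (y, g).
Proof.
rewrite /Inv eqxx eq_sym (negbTE xny) eqxx /= => I T.
have := T; move/Ts_E => [ed c].
case: g ed c {T} => ed c; last by move: nEyx; rewrite ed.
have xS : x \notin S by rewrite c andbF.
rewrite /SegYT; case: f I {c} => I; first by rewrite I.
case/or3P: I => [Rx | /andP[K _] | /andP[Ry yS]].
- by rewrite Rx xS orbT.
- by rewrite K.
- by rewrite Ry yS xS !orbT.
Qed.

Lemma L_yx f g : Inv (y, f) -> Ts E S (y, f) (x, g) -> Inv (x, g).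
Proof.
rewrite /Inv eqxx eq_sym (negbTE xny) eqxx /= => I T.
have := T; move/Ts_E => [ed c].
case: g ed c {T} => ed c; first by move: nEyx; rewrite ed.
rewrite andbT in c; rewrite /SegXF.
case: f I c => I c.
  case/or3P: I => [K | /andP[Rx _] | /and3P[_ yS _]].
  + by rewrite K c orbT.
  + by rewrite Rx.
  + by move: yS; rewrite c.
by rewrite I c !orbT.
Qed.

Lemma Inv_step a b : Inv a -> Ts E S a b -> Inv b.
Proof.
case: a b => v f [w g] I T.
have vw : v != w.
  apply/eqP => e; subst w; have := T; move/Ts_E => [ed _].
  by move: (dE v); case: (g) ed => ->.
case: (eqVneq v x) => [vx | vx]; case: (eqVneq v y) => [vy | vy].
- by move: xny; rewrite -vx -vy eqxx.
- subst v; case: (eqVneq w y) => [wy | wy].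
    by subst w; apply: L_xy I T.
  have wx : w != x by rewrite eq_sym.
  rewrite /Inv /= (negbTE wx) (negbTE wy).
  exact: L_xN wx wy I T.
- subst v; case: (eqVneq w x) => [wx | wx].
    by subst w; apply: L_yx I T.
  have Iy : Inv (y, f) by [].
  have wy : w != y by rewrite eq_sym.
  rewrite /Inv /= (negbTE wx) (negbTE wy).
  exact: L_yN wx wy Iy T.
- have Rv : R' (v, f) by move: I; rewrite /Inv /= (negbTE vx) (negbTE vy).
  case: (eqVneq w x) => [wx | wx]; first by subst w; apply: L_Nx vx vy Rv T.
  case: (eqVneq w y) => [wy | wy]; first by subst w; apply: L_Ny vx vy Rv T.
  rewrite /Inv /= (negbTE wx) (negbTE wy).
  exact: (R'step Rv (Ts_l vx vy T)).
Qed.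

Lemma CR_SW k : SW E S j k -> SW Erev S j k.
Proof.
move=> [g /connectP[q pq lq]].
have I0 : Inv (j, false).
  rewrite /Inv /=; case: (eqVneq j x) => [jx | jx].
    by rewrite /SegXF -jx /R' connect0.
  case: (eqVneq j y) => [jy | jy]; by rewrite /R' -?jy connect0.
have := path_inv (P := fun a => is_true (Inv a)) I0 Inv_step pq; rewrite -lq.
rewrite /Inv /=.
case: (eqVneq k x) => [kx | kx].
  subst k; case: g {lq} => [/andP[Rx _] | ]; first by exists true.
  case/or3P => [Rx | /andP[/andP[Rx _] _] | /andP[Ry yS]]; try by exists false.
    by exists true.
  exists true; apply: (R'step Ry); by rewrite /Ts /= Erev_yx (negbTE yS).
case: (eqVneq k y) => [ky | ky]; last by move=> H; exists g.
subst k; case: g {lq}; last by move=> H; exists false.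
case/or3P => [/andP[_ Ry] | /andP[Rx xS] | /and3P[Ry _ _]].
- by exists true.
- exists false; apply: (R'step Rx); by rewrite /Ts /= Erev_yx (negbTE xS).
- by exists false.
Qed.

End Covered.

Lemma CR_dconn p (E : rel 'I_p) (S : {set 'I_p}) (x y j k : 'I_p) :
  (forall a, ~~ E a a) -> E x y -> ~~ E y x ->
  (forall z, E z x -> E z y) -> (forall z, E z y -> z != x -> E z x) ->
  j != k -> j \notin S ->
  dconnected E j k S <-> dconnected (Erev E x y) j k S.
Proof.
move=> dE Exy nEyx C2 C3 jk jS.
have xy : x != y by apply: xny dE Exy.
split.
  by move/(dconn_SW jS)/(CR_SW dE Exy nEyx C2 C3)/(SW_dconn jk jS).
set E' := Erev E x y.
have eE : Erev E' y x = E.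
  apply: functional_extensionality => a; apply: functional_extensionality => b.
  rewrite /E' /Erev.
  case: (boolP ((a == y) && (b == x))) => [/andP[/eqP -> /eqP ->] | h1].
    by rewrite (negbTE nEyx).
  by case: (boolP ((a == x) && (b == y))) => [/andP[/eqP -> /eqP ->] | h2]; first by rewrite Exy.
have dE' : forall a, ~~ E' a a.
  move=> a; rewrite /E' /Erev.
  case: (eqVneq a x) => [ax|ax]; case: (eqVneq a y) => [ay|ay] /=; rewrite ?dE //.
have E'yx : E' y x by rewrite /E' Erev_yx.
have nE'xy : ~~ E' x y by rewrite /E' Erev_xy.
have yx : y != x by rewrite eq_sym.
have C2' : forall z, E' z y -> E' z x.
  move=> z; rewrite /E' /Erev.
  case: (eqVneq z x) => [->|zx]; case: (eqVneq z y) => [zy|zy];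
    rewrite ?eqxx ?(negbTE xy) ?(negbTE yx) /= //.
  all: try (by move=> H; apply: C3).
have C3' : forall z, E' z x -> z != y -> E' z y.
  move=> z; rewrite /E' /Erev.
  case: (eqVneq z x) => [->|zx]; case: (eqVneq z y) => [zy|zy];
    rewrite ?eqxx ?(negbTE xy) ?(negbTE yx) /= //.
  all: try (by move=> H _; apply: C2).
  all: try (by rewrite (negbTE (dE x))).
move/(dconn_SW jS)/(CR_SW dE' E'yx nE'xy C2' C3')/(SW_dconn jk jS).
by rewrite eE.
Qed.

(* ---------- Chickering's covered edge ---------- *)
Section Chick.
Variable p : nat.
Implicit Types (E : rel 'I_p).

Definition adj E a b := E a b || E b a.
Definition vs E a b c := [&& E a b, E c b, a != c & ~~ adj E a c].
Definition anc E v := #|[set u | connect E u v]|.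
Definition Dl (E1 E2 : rel 'I_p) : {set 'I_p * 'I_p} := [set pr | E1 pr.1 pr.2 && E2 pr.2 pr.1].

Lemma acyc_irr E : acyclic E -> forall a, ~~ E a a.
Proof. by move=> aE a; apply/negP => Eaa; move: (aE a a Eaa); rewrite connect0. Qed.

Lemma acyc_asym E a b : acyclic E -> E a b -> ~~ E b a.
Proof. by move=> aE Eab; apply/negP => Eba; move: (aE a b Eab); rewrite connect1. Qed.

Lemma acyc_conn E a b : acyclic E -> connect E a b -> connect E b a -> a = b.
Proof.
move=> aE /connectP[[|c q] /= pq ->] // ba.
case/andP: pq => Eac pq.
have : connect E c a by apply: connect_trans _ ba; apply/connectP; exists q.
by move: (aE a c Eac) => /negbTE ->.
Qed.

Lemma anc_lt E a b : acyclic E -> connect E a b -> a != b -> anc E a < anc E b.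
Proof.
move=> aE ab nab; apply: proper_card; apply/properP; split.
  by apply/subsetP => u; rewrite !inE => ua; apply: connect_trans ua ab.
exists b; rewrite inE ?connect0 //.
by apply/negP => ba; move: nab; rewrite (acyc_conn aE ab ba) eqxx.
Qed.

Lemma exmin (T : finType) (P : pred T) (F : T -> nat) : (exists i, P i) ->
  exists i, P i /\ forall j, P j -> F i <= F j.
Proof. by case=> i0 Pi0; case: (arg_minnP F Pi0) => i Pi H; exists i. Qed.

Lemma exmax (T : finType) (P : pred T) (F : T -> nat) : (exists i, P i) ->
  exists i, P i /\ forall j, P j -> F j <= F i.
Proof. by case=> i0 Pi0; case: (arg_maxnP F Pi0) => i Pi H; exists i. Qed.

Lemma chickering E1 E2 : acyclic E1 -> acyclic E2 -> adj E1 =2 adj E2 ->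
  (forall a b c, vs E1 a b c = vs E2 a b c) -> Dl E1 E2 != set0 ->
  exists x, exists y, [/\ (x, y) \in Dl E1 E2, (forall z, E1 z x -> E1 z y) &
                          (forall z, E1 z y -> z != x -> E1 z x)].
Proof.
move=> a1 a2 adjE vsE /set0Pn[pr prD].
have Pex : exists y, [exists x, E1 x y && E2 y x].
  by exists pr.2; apply/existsP; exists pr.1; move: prD; rewrite inE.
have [y [Py miny]] := @exmin _ (fun y => [exists x, E1 x y && E2 y x]) (anc E1) Pex.
have Qex : exists x, E1 x y && E2 y x by apply/existsP.
have [x [Qx maxx]] := @exmax _ (fun x => E1 x y && E2 y x) (anc E1) Qex.
case/andP: (Qx) => Exy Eyx.
have xy : x != y by apply/eqP => e; move: (acyc_irr a1 x); rewrite {2}e Exy.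
exists x, y; split.
- by rewrite inE Exy Eyx.
- move=> z Ezx.
  have zy : z != y.
    by apply/eqP => e; move: (acyc_asym a1 Exy); rewrite -e Ezx.
  have : adj E1 z y.
    apply/negPn/negP => na.
    have : adj E2 z x by rewrite -adjE /adj Ezx.
    case/orP => [E2zx | E2xz].
    + have : vs E2 z x y by rewrite /vs E2zx Eyx zy -adjE na.
      rewrite -vsE => /and4P[_ E1yx _ _].
      by move: (acyc_asym a1 Exy); rewrite E1yx.
    + have Px : [exists x0, E1 x0 x && E2 x x0] by apply/existsP; exists z; rewrite Ezx E2xz.
      have := miny x Px; have := anc_lt a1 (connect1 Exy) xy.
      by move=> H1 H2; move: (leq_ltn_trans H2 H1); rewrite ltnn.
  case/orP => // E1yz.
  have : connect E1 z y by apply: connect_trans (connect1 Ezx) (connect1 Exy).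
  by move: (a1 y z E1yz) => /negbTE ->.
- move=> w Ewy wx.
  have : adj E1 w x.
    apply/negPn/negP => na.
    have : vs E1 w y x by rewrite /vs Ewy Exy wx na.
    rewrite vsE => /and4P[_ E2xy _ _].
    by move: (acyc_asym a2 Eyx); rewrite E2xy.
  case/orP => // E1xw; exfalso.
  have wy : w != y by apply/eqP => e; move: (acyc_irr a1 w); rewrite {2}e Ewy.
  have xw : x != w by apply/eqP => e; move: (acyc_irr a1 x); rewrite {2}e E1xw.
  have : adj E2 w y by rewrite -adjE /adj Ewy.
  case/orP => [E2wy | E2yw].
  + have : adj E2 x w by rewrite -adjE /adj E1xw.
    case/orP => [E2xw | E2wx].
      have : connect E2 w x by apply: connect_trans (connect1 E2wy) (connect1 Eyx).
      by move: (a2 x w E2xw) => /negbTE ->.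
    have Pw : [exists x0, E1 x0 w && E2 w x0] by apply/existsP; exists x; rewrite E1xw E2wx.
    have := miny w Pw; have := anc_lt a1 (connect1 Ewy) wy.
    by move=> H1 H2; move: (leq_ltn_trans H2 H1); rewrite ltnn.
  + have := maxx w; rewrite Ewy E2yw => /(_ erefl).
    have := anc_lt a1 (connect1 E1xw) xw.
    by move=> H1 H2; move: (leq_ltn_trans H2 H1); rewrite ltnn.
Qed.

End Chick.

Section RevProps.
Variable p : nat.
Variables (E : rel 'I_p) (x y : 'I_p).
Hypotheses (aE : acyclic E) (Exy : E x y)
  (C2 : forall z, E z x -> E z y) (C3 : forall z, E z y -> z != x -> E z x).

Let E0 : rel 'I_p := fun a b => E a b && ((a != x) || (b != y)).

Lemma E0_sub : subrel E0 E.
Proof. by move=> a b /andP[]. Qed.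

Lemma E0_noxy : ~~ connect E0 x y.
Proof.
apply/negP => /connectP[q pq]; case/lastP: q pq => [|q a] /=.
  by move=> _ e; move: Exy; rewrite e (negbTE (acyc_irr aE x)).
rewrite last_rcons rcons_path => /andP[pq E0w] ay; subst a.
set w := last x q in E0w.
case/andP: E0w => Ewy; rewrite eqxx orbF => wx.
have Ewx := C3 Ewy wx.
have : connect E x w.
  apply/connectP; exists q => //; exact: (sub_path E0_sub pq).
by move: (aE Ewx) => /negbTE ->.
Qed.

Lemma Erev_cases a b : Erev E x y a b -> ((a == y) && (b == x)) || E0 a b.
Proof.
rewrite /Erev /E0; case: (boolP ((a == x) && (b == y))) => // h1.
case: (boolP ((a == y) && (b == x))) => // _ Eab.
by rewrite Eab -negb_and h1.
Qed.

Lemma rev_conn u v : connect (Erev E x y) u v ->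
  connect E0 u v || (connect E0 u y && connect E0 x v).
Proof.
move=> /connectP[q pq ->] {v}.
elim: q u pq => [|a q IH] u /=; first by rewrite connect0.
move=> /andP[Eua pq]; have := IH a pq.
case/orP: (Erev_cases Eua) => [/andP[/eqP uy /eqP ax] | E0ua].
  subst u a => /orP[H | /andP[_ H]]; by rewrite H connect0 orbT.
case/orP => [H | /andP[H1 H2]].
  by rewrite (connect_trans (connect1 E0ua) H).
by rewrite (connect_trans (connect1 E0ua) H1) H2 orbT.
Qed.

Lemma rev_acyc : acyclic (Erev E x y).
Proof.
move=> a b Eab; apply/negP => /rev_conn H.
case/orP: (Erev_cases Eab) => [/andP[/eqP ay /eqP bx] | E0ab].
  subst a b; case/orP: H => [H | /andP[H _]]; by move: E0_noxy; rewrite H.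
case/orP: H => [H | /andP[H1 H2]].
  have := aE (E0_sub E0ab).
  by rewrite (connect_sub (fun a b h => connect1 (E0_sub h)) H).
have : connect E0 x y.
  by apply: connect_trans H2 (connect_trans (connect1 E0ab) H1).
by rewrite (negbTE E0_noxy).
Qed.

Lemma nEyx : ~~ E y x.
Proof. exact: acyc_asym aE Exy. Qed.

Lemma xny' : x != y.
Proof. by apply/eqP => e; move: Exy; rewrite e (negbTE (acyc_irr aE y)). Qed.

Lemma Erev_ax a : Erev E x y a x = (a == y) || E a x.
Proof.
rewrite /Erev eqxx andbT (negbTE xny') andbF /=.
by case: (eqVneq a y) => [->|] //=; rewrite (negbTE nEyx).
Qed.

Lemma Erev_ay a : Erev E x y a y = (a != x) && E a y.
Proof.
rewrite /Erev eqxx andbT (eq_sym y x) (negbTE xny') andbF /=.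
by case: (a == x).
Qed.

Lemma Erev_gen a b : b != x -> b != y -> Erev E x y a b = E a b.
Proof. by move=> /negbTE bx /negbTE by_; rewrite /Erev bx by_ !andbF. Qed.

Lemma rev_adj a b : adj (Erev E x y) a b = adj E a b.
Proof.
rewrite /adj.
case: (boolP ([|| (a == x) && (b == y) | (a == y) && (b == x)])).
  case/orP => /andP[/eqP -> /eqP ->]; rewrite ?Erev_ay ?Erev_ax eqxx Exy ?orbT //.
  by rewrite eqxx.
rewrite negb_or => /andP[h1 h2].
rewrite /Erev (negbTE h1) (negbTE h2) (andbC (b == x)) (negbTE h2) (andbC (b == y)) (negbTE h1).
by [].
Qed.

Lemma rev_vs a b c : vs (Erev E x y) a b c = vs E a b c.
Proof.
rewrite /vs rev_adj.
case H: ((a != c) && ~~ adj E a c); last first.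
  by move: H; case: (a != c); case: (adj E a c) => //= _; rewrite !andbF.
case/andP: H => ac na; rewrite !andbT.
case: (eqVneq b x) => [-> | bx].
  rewrite !Erev_ax.
  case: (eqVneq a y) => [ay | ay] /=.
    subst a; rewrite (negbTE nEyx) /=.
    case: (eqVneq c y) => [cy|cy] /=; first by move: ac; rewrite cy eqxx.
    by apply/negP => Ecx; move: na; rewrite /adj (C2 Ecx) orbT.
  case: (eqVneq c y) => [cy|cy] //=.
  subst c; rewrite (negbTE nEyx) andbF andbT.
  by apply/negP => Eax; move: na; rewrite /adj (C2 Eax).
case: (eqVneq b y) => [-> | by_].
  rewrite !Erev_ay.
  case: (eqVneq a x) => [ax | ax] /=.
    subst a; apply/esym/negP => /andP[_ Ecy].
    have cx : c != x by rewrite eq_sym.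
    by move: na; rewrite /adj (C3 Ecy cx) orbT.
  case: (eqVneq c x) => [cx | cx] //=.
  subst c; rewrite andbF; apply/esym/negP => /andP[Eay _].
  by move: na; rewrite /adj (C3 Eay ax).
by rewrite !Erev_gen.
Qed.

Lemma rev_Dl (E2 : rel 'I_p) : acyclic E2 -> E2 y x ->
  Dl (Erev E x y) E2 = Dl E E2 :\ (x, y).
Proof.
move=> a2 E2yx; apply/setP => -[a b]; rewrite !inE /=.
case: (boolP ((a == x) && (b == y))) => [/andP[/eqP -> /eqP ->] | h1].
  by rewrite !eqxx /Erev !eqxx.
case: (boolP ((a == y) && (b == x))) => [/andP[/eqP -> /eqP ->] | h2].
  rewrite /Erev eqxx (negbTE xny') (eq_sym y x) (negbTE xny') /= (negbTE nEyx) /=.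
  by rewrite eqxx (negbTE (acyc_asym a2 E2yx)) !andbF.
have -> : (a, b) != (x, y) by rewrite xpair_eqE.
by rewrite /Erev (negbTE h1) (negbTE h2).
Qed.

End RevProps.

Lemma VP p (E2 : rel 'I_p) : acyclic E2 -> forall n (E1 : rel 'I_p), acyclic E1 ->
  adj E1 =2 adj E2 -> (forall a b c, vs E1 a b c = vs E2 a b c) -> #|Dl E1 E2| = n ->
  forall j k (S : {set 'I_p}), j != k -> j \notin S ->
  (dconnected E1 j k S <-> dconnected E2 j k S).
Proof.
move=> a2; elim=> [|n IH] E1 a1 adjE vsE cD j k S jk jS.
  have D0 : Dl E1 E2 = set0 by apply: cards0_eq.
  have e : E1 = E2.
    apply: functional_extensionality => a; apply: functional_extensionality => b.
    apply/idP/idP => H.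
      have : adj E2 a b by rewrite -adjE /adj H.
      case/orP => // E2ba.
      have : (a, b) \in Dl E1 E2 by rewrite inE H E2ba.
      by rewrite D0 inE.
    have : adj E1 a b by rewrite adjE /adj H.
    case/orP => // E1ba.
    have : (b, a) \in Dl E1 E2 by rewrite inE H E1ba.
    by rewrite D0 inE.
  by rewrite e.
have Dn : Dl E1 E2 != set0 by apply/eqP => D0; move: cD; rewrite D0 cards0.
have [x [y [xyD C2 C3]]] := chickering a1 a2 adjE vsE Dn.
move: (xyD); rewrite inE /= => /andP[Exy E2yx].
have e1 := CR_dconn (acyc_irr a1) Exy (acyc_asym a1 Exy) C2 C3 jk jS.
apply: (iff_trans e1).
apply: (IH (Erev E1 x y)) => //.
- exact: rev_acyc a1 Exy C3.
- by move=> a b; rewrite rev_adj.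
- by move=> a b c; rewrite rev_vs.
- rewrite rev_Dl //; move: cD; rewrite (cardsD1 (x, y)) xyD /= add1n.
  by case.
Qed.

Lemma dag_skel p (E : rel 'I_p) a b : acyclic E -> skel E a b <-> (a != b) && adj E a b.
Proof.
move=> aE; split.
  move=> [ab [H|[H|[l [Eal Ebl /orP[H|H]]]]]]; rewrite ab /adj ?H ?orbT //.
    by move: (aE _ _ Eal); rewrite H.
  by move: (aE _ _ Ebl); rewrite H.
by case/andP => ab /orP[H|H]; split => //; auto.
Qed.

Lemma noncol_dconn p (E : rel 'I_p) (S : {set 'I_p}) a b c : a != c -> b != a -> b != c ->
  adj E a b -> adj E c b -> ~~ (E a b && E c b) -> b \notin S -> dconnected E a c S.
Proof.
move=> ac ba bc ab cb ncol bS.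
exists [:: (b, E a b); (c, ~~ E c b)]; split => //=.
- by rewrite !inE negb_or eq_sym ba ac bc.
- case=> [|[|i]] //= _.
    by case: (boolP (E a b)) => // nab; move: ab; rewrite /adj (negbTE nab).
  case: (boolP (E c b)) => //= ncb; move: cb; rewrite /adj (negbTE ncb) //.
- case=> [|i] //= _; rewrite /collider_at /= negbK.
  split; first by rewrite (negbTE bS).
  by rewrite (negbTE ncol).
Qed.

Lemma dag_vs p (E1 E2 : rel 'I_p) : digraph E1 -> digraph E2 -> acyclic E1 -> acyclic E2 ->
  adj E1 =2 adj E2 -> Dsep_sub E1 E2 -> forall a b c, vs E1 a b c = vs E2 a b c.
Proof.
move=> d1 d2 a1 a2 adjE sub a b c.
rewrite /vs -adjE.
case H: ((a != c) && ~~ adj E1 a c); last first.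
  by move: H; case: (a != c); case: (adj E1 a c) => //= _; rewrite !andbF.
case/andP: H => ac na; rewrite !andbT.
have nsk : ~ skel E1 a c by move/(dag_skel _ _ a1); rewrite ac (negbTE na).
have D1 := nskel_dsep d1 ac nsk.
have [_ _ _ nd2] := sub _ _ _ D1.
case: D1 => _ _ _ nd1.
apply/idP/idP => /andP[Hab Hcb].
- have ba : b != a by apply/eqP => e; move: Hab; rewrite e (negbTE (d1 a)).
  have bc : b != c by apply/eqP => e; move: Hcb; rewrite e (negbTE (d1 c)).
  have bS : b \notin ancs E1 a c.
    rewrite inE; apply/negP => /andP[/andP[H _] _].
    by case/orP: H => H; [move: (a1 _ _ Hab) | move: (a1 _ _ Hcb)]; rewrite H.
  apply/negPn/negP => ncol; apply: nd2.
  by apply: noncol_dconn ac ba bc _ _ ncol bS; rewrite -adjE /adj ?Hab ?Hcb ?orbT.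
- have ba : b != a by apply/eqP => e; move: Hab; rewrite e (negbTE (d2 a)).
  have bc : b != c by apply/eqP => e; move: Hcb; rewrite e (negbTE (d2 c)).
  apply/negPn/negP => ncol.
  case: (boolP (b \in ancs E1 a c)) => bS.
    by apply: nd2; apply: collider_dconn ac ba bc Hab Hcb bS.
  apply: nd1.
  by apply: noncol_dconn ac ba bc _ _ ncol bS; rewrite adjE /adj ?Hab ?Hcb ?orbT.
Qed.

Lemma dag_part p (E1 E2 : rel 'I_p) : digraph E1 -> digraph E2 -> acyclic E1 -> acyclic E2 ->
  ~ [/\ skel_eq E1 E2, ~ Dsep_eq E1 E2 & Dsep_sub E1 E2].
Proof.
move=> d1 d2 a1 a2 [se nde sub].
have adjE : adj E1 =2 adj E2.
  move=> a b; case: (eqVneq a b) => [->|ab].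
    by rewrite /adj orbb (negbTE (d1 b)) (negbTE (d2 b)).
  apply/idP/idP => H.
    have : skel E2 a b by apply/se/dag_skel => //; rewrite ab H.
    by move/(dag_skel _ _ a2) => /andP[].
  have : skel E1 a b by apply/se/dag_skel => //; rewrite ab H.
  by move/(dag_skel _ _ a1) => /andP[].
have vsE := dag_vs d1 d2 a1 a2 adjE sub.
apply: nde => j k S; split.
  by move/sub.
case=> jk jS kS nd; split => // H; apply: nd.
by apply/(VP a2 a1 adjE vsE erefl jk jS).
Qed.

Theorem lemma2 :
  (* (a) *)
  (forall (p : nat) (E1 E2 : rel 'I_p), digraph E1 -> digraph E2 ->
     Dsep_sub E1 E2 -> skel_sub E2 E1) /\
  (* (b) existence among directed graphs (cycles allowed) *)
  (exists (p : nat) (E1 E2 : rel 'I_p),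
     [/\ digraph E1, digraph E2, skel_eq E1 E2, ~ Dsep_eq E1 E2 & Dsep_sub E1 E2]) /\
  (* (b) impossibility among DAGs *)
  (forall (p : nat) (E1 E2 : rel 'I_p),
     digraph E1 -> digraph E2 -> acyclic E1 -> acyclic E2 ->
     ~ [/\ skel_eq E1 E2, ~ Dsep_eq E1 E2 & Dsep_sub E1 E2]).
Proof.
split; first exact: part_a.
split; last exact: dag_part.
exists 4, Ex1, Ex2; split.
- exact: Ex1_dg.
- exact: Ex2_dg.
- by move=> j k; rewrite Ex1_skel Ex2_skel.
- exact: ex_neq.
- exact: ex_sub.
Qed.
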